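(* Let $F_0,\dots,F_m\in\mathbb C[t_0,t_1,t_2]$ be homogeneous polynomials defining projective plane curves $\mathcal C_0,\dots,\mathcal C_m\subset\mathbb P^2$, and suppose: (i) $F_1,\dots,F_m$ have positive degree in $t_0$; (ii) $F_1,\dots,F_m$ have the same total degree; (iii) $\gcd(F_1,\dots,F_m)=1$. Let $\bar c=(c_1,\dots,c_m)$ be new variables, $F(\bar c,\bar t_h)=c_1F_1+\dots+c_mF_m$, and $R(\bar c,t_1,t_2)=\operatorname{Res}_{t_0}(F_0,F)$. Let $\operatorname{lc}_{t_0}(F_0)\in\mathbb C[t_1,t_2]$ and $\operatorname{lc}_{t_0}(F)\in\mathbb C[\bar c,t_1,t_2]$ be the leading coefficients with respect to $t_0$. If $\bar t^o=(t_1^o,t_2^o)\in\mathbb C^2\setminus\{\bar0\}$ satisfies $\operatorname{Con}_{\bar c}(R)(\bar t^o)=0$ and $\operatorname{lc}_{t_0}(F_0)(\bar t^o)\cdot\operatorname{lc}_{t_0}(F)(\bar c,\bar t^o)\neq0$ (the latter as a polynomial in $\bar c$), then there exists $t_0^o\in\mathbb C$ such that $(t_0^o:t_1^o:t_2^o)\in\bigcap_{i=0}^m\mathcal C_i$.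
   Context: $\operatorname{Res}_{t_0}$ is the univariate resultant with respect to $t_0$; $\operatorname{Con}_{\bar c}(R)\in\mathbb C[t_1,t_2]$ is the content of $R$ viewed as a polynomial in $\bar c$ with coefficients in $\mathbb C[t_1,t_2]$ (gcd of its coefficients). $\bar t_h=(t_0,t_1,t_2)$. *)

(* Defs.v *)
From HB Require Import structures.
From mathcomp Require Import all_boot all_order all_algebra.
Set Implicit Arguments. Unset Strict Implicit. Unset Printing Implicit Defensive.
Import Order.TTheory GRing.Theory Num.Theory.
Local Open Scope ring_scope.

(* Polynomials in n variables c_1..c_n over an integral domain A, as nested
   univariate polynomials: mpoly A 0 = A, mpoly A n.+1 = {poly (mpoly A n)}
   (the outermost variable is c_{n}). *)
Fixpoint mpoly (A : idomainType) (n : nat) : idomainType :=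
  match n with
  | 0 => A
  | n'.+1 => ({poly (mpoly A n')} : idomainType)
  end.

Fixpoint mconst (A : idomainType) (n : nat) : A -> mpoly A n :=
  match n return A -> mpoly A n with
  | 0 => fun a => a
  | n'.+1 => fun a => (mconst n' a)%:P
  end.

(* the variable c_(i+1), for i : 'I_n *)
Fixpoint mvar (A : idomainType) (n : nat) : 'I_n -> mpoly A n :=
  match n return 'I_n -> mpoly A n with
  | 0 => fun i => 0
  | n'.+1 => fun i => match unlift ord_max i with
                      | Some j => (@mvar A n' j)%:P
                      | None => 'X
                      end
  end.

Fixpoint mmap (A A' : idomainType) (f : A -> A') (n : nat) : mpoly A n -> mpoly A' n :=
  match n return mpoly A n -> mpoly A' n with
  | 0 => f
  | n'.+1 => fun p => map_poly (@mmap A A' f n') p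
  end.

Fixpoint mcoefs (A : idomainType) (n : nat) : mpoly A n -> seq A :=
  match n return mpoly A n -> seq A with
  | 0 => fun a => [:: a]
  | n'.+1 => fun p => flatten (map (@mcoefs A n') (polyseq p))
  end.

(* K[t1,t2], represented as {poly {poly K}}: outer variable t1, inner t2. *)
Notation Kt12 K := {poly {poly K}}.

Definition eval12 (K : fieldType) (q : Kt12 K) (b c : K) : K :=
  (map_poly (fun r : {poly K} => r.[c]) q).[b].

(* K[t0,t1,t2] represented as {poly (K[t1,t2])}: outer variable t0. *)
Definition eval012 (K : fieldType) (p : {poly Kt12 K}) (a b c : K) : K :=
  (map_poly (fun q => eval12 q b c) p).[a].

Definition coef3 (K : fieldType) (p : {poly Kt12 K}) (i j k : nat) : K :=
  ((p`_i)`_j)`_k.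

Definition homogeneous (K : fieldType) (d : nat) (p : {poly Kt12 K}) : Prop :=
  forall i j k, coef3 p i j k != 0 -> (i + j + k)%N = d.

Definition divides (A : comRingType) (d x : A) : Prop := exists r, x = r * d.

Definition is_gcd (A : comRingType) (g : A) (s : seq A) : Prop :=
  (forall x, x \in s -> divides g x) /\
  (forall d, (forall x, x \in s -> divides d x) -> divides d g).

Definition on_curve (K : fieldType) (p : {poly Kt12 K}) (a b c : K) : Prop :=
  eval012 p a b c = 0.

(* Main.v *)
Require Import Defs.
From HB Require Import structures.
From mathcomp Require Import all_boot all_order all_algebra.
Import Order.TTheory GRing.Theory Num.Theory.
Local Open Scope ring_scope.


Lemma map_resultant_gen (aR rR : nzRingType) (f : {rmorphism aR -> rR}) (p q : {poly aR}) :
    f (lead_coef p) != 0 -> f (lead_coef q) != 0 ->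
  f (resultant p q)= resultant (map_poly f p) (map_poly f q).
Proof.
move=> nz_fp nz_fq; rewrite /resultant /Sylvester_mx !size_map_poly_id0 //.
rewrite -det_map_mx /= map_col_mx; congr (\det (col_mx _ _));
  by apply: map_lin1_mx => v; rewrite map_poly_rV rmorphM /= map_rVpoly.
Qed.

Fixpoint mmapR (A A' : idomainType) (f : {rmorphism A -> A'}) (n : nat)
  : {rmorphism mpoly A n -> mpoly A' n} :=
  match n return {rmorphism mpoly A n -> mpoly A' n} with
  | 0 => f
  | n'.+1 => (map_poly (mmapR A A' f n') : {rmorphism {poly mpoly A n'} -> {poly mpoly A' n'}})
  end.

Lemma mmapE (A A' : idomainType) (f : {rmorphism A -> A'}) n x :
  @mmap A A' f n x = @mmapR A A' f n x.
Proof.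
elim: n x => [//|n IH] x /=; apply: eq_map_poly => y; exact: IH.
Qed.

Fixpoint mconstR (A : idomainType) (n : nat) : {rmorphism A -> mpoly A n} :=
  match n return {rmorphism A -> mpoly A n} with
  | 0 => idfun
  | n'.+1 => (polyC \o mconstR A n' : {rmorphism A -> {poly mpoly A n'}})
  end.

Lemma mconstE (A : idomainType) n x : mconst n x = mconstR A n x.
Proof. by elim: n => //= n ->. Qed.
Arguments mmapR {A A'} f n.

Lemma mmap_mconst (A A' : idomainType) (f : {rmorphism A -> A'}) n a :
  mmapR f n (mconstR A n a) = mconstR A' n (f a).
Proof. by elim: n => //= n IH; rewrite map_polyC /= IH. Qed.

Lemma mmap_mvar (A A' : idomainType) (f : {rmorphism A -> A'}) n i :
  mmapR f n (@mvar A n i) = @mvar A' n i.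
Proof.
elim: n i => [[]//|n IH] i /=.
case: (unlift ord_max i) => [j|]; first by rewrite map_polyC /= IH.
by rewrite map_polyX.
Qed.

Lemma mmap_zero (A A' : idomainType) (f : {rmorphism A -> A'}) n r :
  (forall x, x \in mcoefs r -> f x = 0) -> mmapR f n r = 0.
Proof.
elim: n r => [|n IH] r /= H; first by apply: H; rewrite inE.
apply/polyP => i; rewrite coef_map coef0 /=.
have [lt|ge] := ltnP i (size r); last by rewrite nth_default // rmorph0.
apply: IH => x xin; apply: H; apply/flattenP.
exists (mcoefs r`_i) => //; apply: map_f; exact: mem_nth.
Qed.

Lemma mconst_inj (A : idomainType) n : injective (mconstR A n).
Proof.
elim: n => [//|n IH] x y /= /polyC_inj; exact: IH.
Qed.

Lemma mvar_indep (A : idomainType) n (a : 'I_n -> A) :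
  \sum_(i < n) @mvar A n i * mconstR A n (a i) = 0 -> forall i, a i = 0.
Proof.
elim: n a => [|n IH] a; first by move=> _ [].
rewrite big_ord_recr /= unlift_none => H.
have Hw j : unlift ord_max (widen_ord (leqnSn n) j) = Some j.
  have -> : widen_ord (leqnSn n) j = lift ord_max j.
    by apply: val_inj; rewrite /= /bump leqNgt ltn_ord.
  exact: liftK.
rewrite (eq_bigr (fun j => (mvar A j * mconstR A n (a (widen_ord (leqnSn n) j)))%:P)) in H; last by move=> j _; rewrite Hw polyCM.
rewrite -rmorph_sum /= in H.
have H1 := congr1 (fun p : {poly mpoly A n} => p`_1) H.
have H0 := congr1 (fun p : {poly mpoly A n} => p`_0) H.
rewrite /= coef0 coefD coefC /= add0r coefXM /= coefC /= in H1.
rewrite /= coef0 coefD coefC /= coefXM /= addr0 in H0.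
have an : a ord_max = 0 by apply: (@mconst_inj A n); rewrite H1 rmorph0.
move=> i; case: (unliftP ord_max i) => [j ->|->] //.
have := IH (fun j => a (lift ord_max j)) _ j.
apply; rewrite -[RHS]H0; apply: eq_bigr => k _; congr (_ * mconstR A n (a _)).
by apply: val_inj; rewrite /= /bump leqNgt ltn_ord.
Qed.

Lemma coprime_prod_XsubC (L : fieldType) (rs : seq L) q :
  (forall z, z \in rs -> ~~ root q z) -> coprimep (\prod_(z <- rs) ('X - z%:P)) q.
Proof.
elim: rs => [|z rs IH] H; first by rewrite big_nil coprime1p.
rewrite big_cons coprimepMl IH ?andbT; last by move=> y yin; apply: H; rewrite inE yin orbT.
by rewrite coprimep_sym coprimep_XsubC H // inE eqxx.
Qed.

Theorem mainTheorem12 (K : closedFieldType) (hK : [pchar K] =i pred0) (m : nat)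
  (F0 : {poly Kt12 K}) (F : 'I_m -> {poly Kt12 K})
  (hhom0 : exists d : nat, homogeneous d F0)
  (hhom : exists d : nat, forall i, homogeneous d (F i))
  (hdeg : forall i, (0 < (size (F i)).-1)%N)
  (hgcd : forall D : {poly Kt12 K}, (forall i, divides D (F i)) -> D \is a GRing.unit)
  (t1o t2o : K) (hto : (t1o, t2o) != (0, 0)) :
  let Fc : {poly mpoly (Kt12 K) m} :=
    \sum_(i < m) (@mvar (Kt12 K) m i)%:P * map_poly (@mconst (Kt12 K) m) (F i) in
  let R : mpoly (Kt12 K) m := resultant (map_poly (@mconst (Kt12 K) m) F0) Fc in
  (exists g : Kt12 K, is_gcd g (mcoefs R) /\ eval12 g t1o t2o = 0) ->
  @mconst K m (eval12 (lead_coef F0) t1o t2o)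
    * @mmap (Kt12 K) K (fun b : Kt12 K => eval12 b t1o t2o) m (lead_coef Fc) != 0 ->
  exists t0o : K, on_curve F0 t0o t1o t2o /\ forall i, on_curve (F i) t0o t1o t2o.
Proof.
move=> Fc R [g [[gdiv _] g0]] Hlc.
pose ev : {rmorphism Kt12 K -> K} := horner_eval t1o \o map_poly (horner_eval t2o).
have evE q : eval12 q t1o t2o = ev q by [].
pose E := mmapR ev m.
have mcE : @mconst (Kt12 K) m =1 mconstR _ m by move=> x; rewrite mconstE.
have mcKE : @mconst K m =1 mconstR _ m by move=> x; rewrite mconstE.
have ER : E R = 0.
  apply: mmap_zero => x /gdiv [r ->]; by rewrite rmorphM (_ : ev g = 0) ?mulr0.
move: Hlc; rewrite mcKE evE.
have -> : mmap (fun b : Kt12 K => eval12 b t1o t2o) (lead_coef Fc) = E (lead_coef Fc).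
  by rewrite -mmapE.
rewrite mulf_eq0 negb_or => /andP[hp hq].
have hp' : ev (lead_coef F0) != 0 by apply: contraNneq hp => ->; rewrite rmorph0.
pose p := map_poly (mconstR (Kt12 K) m) F0.
have pE : map_poly (@mconst (Kt12 K) m) F0 = p by apply: eq_map_poly.
pose f0 := map_poly ev F0.
pose f i := map_poly ev (F i).
have lcp : lead_coef p = mconstR _ m (lead_coef F0).
  by rewrite (lead_coef_map_inj (@mconst_inj _ m)) ?rmorph0.
have hpE : E (lead_coef p) != 0 by rewrite lcp mmap_mconst.
have Res0 := @map_resultant_gen _ _ E p Fc hpE hq.
rewrite /R pE in ER; rewrite ER in Res0.
have pDE : map_poly E p = map_poly (mconstR K m) f0.
  rewrite /p /f0 -!map_poly_comp; apply: eq_map_poly => x /=; exact: mmap_mconst.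
have qDE : map_poly E Fc = \sum_(i < m) (@mvar K m i)%:P * map_poly (mconstR K m) (f i).
  rewrite /Fc rmorph_sum; apply: eq_bigr => i _.
  rewrite rmorphM /= map_polyC /= mmap_mvar; congr (_ * _).
  rewrite (eq_map_poly mcE) /f -!map_poly_comp; apply: eq_map_poly => x /=; exact: mmap_mconst.
pose tf : {rmorphism mpoly K m -> {fraction mpoly K m}} := @tofrac (mpoly K m).
have lcpD : lead_coef (map_poly E p) = E (lead_coef p) by rewrite lead_coef_map_eq.
have lcqD : lead_coef (map_poly E Fc) = E (lead_coef Fc) by rewrite lead_coef_map_eq.
have h1 : tf (lead_coef (map_poly E p)) != 0 by rewrite lcpD /tf tofrac_eq0.
have h2 : tf (lead_coef (map_poly E Fc)) != 0 by rewrite lcqD /tf tofrac_eq0.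
have Res1 := @map_resultant_gen _ _ tf _ _ h1 h2.
rewrite -Res0 rmorph0 in Res1.
have : ~~ coprimep (map_poly tf (map_poly E p)) (map_poly tf (map_poly E Fc)).
  by rewrite coprimep_def -(eqn_add2r 0) addn0; move: (esym Res1) => /eqP; rewrite resultant_eq0; case: (size _) => [|[]].
pose phi : {rmorphism K -> {fraction mpoly K m}} := tf \o mconstR K m.
have [rs Hrs] := closed_field_poly_normal f0.
have lcf0 : lead_coef f0 != 0 by rewrite lead_coef_map_eq.
rewrite pDE -map_poly_comp -/phi Hrs map_polyZ rmorph_prod /=.
rewrite (eq_bigr (fun z => 'X - (phi z)%:P)); last by move=> z _; rewrite map_polyXsubC.
rewrite coprimepZl; last by rewrite /phi /= tofrac_eq0 -(rmorph0 (mconstR K m)) (inj_eq (@mconst_inj _ m)).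
case: (boolP (has (fun z => root (map_poly tf (map_poly E Fc)) (phi z)) rs)); last first.
  move/hasPn => H; rewrite -(big_map phi xpredT (fun w => 'X - w%:P)).
  by rewrite coprime_prod_XsubC // => y /mapP[z zin ->]; exact: H.
move=> /hasP[z zin rz] _.
have f0z : f0.[z] = 0 by apply/rootP; rewrite Hrs rootZ // root_prod_XsubC.
have qz : (map_poly E Fc).[mconstR K m z] = 0.
  apply/eqP; rewrite -(tofrac_eq0) -/(tf _) -horner_map; exact/eqP/rootP.
rewrite qDE horner_sum in qz.
have fz : forall i, (f i).[z] = 0.
  apply: mvar_indep; rewrite -[RHS]qz; apply: eq_bigr => i _.
  by rewrite hornerM hornerC horner_map.
have evE' (P : {poly Kt12 K}) : map_poly (fun q => eval12 q t1o t2o) P = map_poly ev P.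
  by apply: eq_map_poly.
exists z; split; first by rewrite /on_curve /eval012 evE'.
by move=> i; rewrite /on_curve /eval012 evE'; exact: fz.
Qed.
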